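(* Let $X$ be a nonempty set, $Y$ a nonempty set, and $F\colon X^*\to Y$ a function. The following assertions are equivalent. (i) $F$ is unarily idempotizable, i.e., $\mathrm{ran}(F_1)=\mathrm{ran}(F^{\flat})$ and $F_1$ is one-to-one. (ii) $F_1$ is a bijection from $X$ onto $\mathrm{ran}(F^{\flat})$ and there is a unique unarily idempotent $\varepsilon$-standard operation $H\colon X^*\to X\cup\{\varepsilon\}$, namely the one with $H^{\flat}=F_1^{-1}\circ F^{\flat}$, such that $F^{\flat}=F_1\circ H^{\flat}$. (iii) There exist a unarily idempotent $\varepsilon$-standard operation $H\colon X^*\to X\cup\{\varepsilon\}$ and a bijection $f$ from $X$ onto $\mathrm{ran}(F^{\flat})$ such that $F^{\flat}=f\circ H^{\flat}$. Moreover, in case (iii) we necessarily have $f=F_1$ and $H^{\flat}=F_1^{-1}\circ F^{\flat}$.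
   Context: $X^*=\bigcup_{n\geqslant 0}X^n$ is the set of all finite tuples over $X$, where $X^0=\{\varepsilon\}$ and $\varepsilon$ is the empty tuple (assumed not to be an element of $X$). For $F\colon X^*\to Y$ and $n\geqslant 0$, $F_n=F|_{X^n}$ is the $n$-ary part of $F$ (with $X^1$ identified with $X$), and $F^{\flat}=F|_{X^*\setminus\{\varepsilon\}}$ is its non-nullary part. A function $F\colon X^*\to Y$ is standard if $F(\mathbf{x})=F(\varepsilon)$ holds only if $\mathbf{x}=\varepsilon$. A variadic operation on $X$ is a function $F\colon X^*\to X\cup\{\varepsilon\}$; it is $\varepsilon$-standard if it is standard and $F(\varepsilon)=\varepsilon$. An $\varepsilon$-standard operation $H$ is unarily idempotent if $H_1$ is the identity map of $X$. *)

(* Defs.v *)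
(* X^* is modelled as [list X]; X ∪ {ε} as [option X] with
   [None] playing the role of ε. *)
From Stdlib Require Import List.
Import ListNotations.

Definition unary_part {X Y : Type} (F : list X -> Y) : X -> Y :=
  fun x => F [x].

Definition ran_flat {X Y : Type} (F : list X -> Y) (y : Y) : Prop :=
  exists s, s <> [] /\ F s = y.

Definition ran {X Y : Type} (g : X -> Y) (y : Y) : Prop := exists x, g x = y.

Definition standard {X Y : Type} (F : list X -> Y) : Prop :=
  forall s, F s = F [] -> s = [].

Definition eps_standard {X : Type} (H : list X -> option X) : Prop :=
  standard H /\ H [] = None.

Definition unarily_idempotent {X : Type} (H : list X -> option X) : Prop :=
  eps_standard H /\ forall x, H [x] = Some x.

Definition one_to_one {X Y : Type} (g : X -> Y) : Prop :=
  forall x1 x2, g x1 = g x2 -> x1 = x2.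

Definition bijection_onto {X Y : Type} (g : X -> Y) (S : Y -> Prop) : Prop :=
  one_to_one g /\ (forall y, ran g y <-> S y).

(* F^flat = f ∘ H^flat  (H ε-standard, so H^flat takes values in X). *)
Definition flat_factors {X Y : Type} (F : list X -> Y) (f : X -> Y)
    (H : list X -> option X) : Prop :=
  forall s, s <> [] -> exists x, H s = Some x /\ F s = f x.

(* H^flat = g^{-1} ∘ F^flat, where g^{-1} is the inverse of the injective g
   on its range: for every nonempty s, H s is the (unique) x with g x = F s. *)
Definition flat_is_inv_comp {X Y : Type} (H : list X -> option X)
    (g : X -> Y) (F : list X -> Y) : Prop :=
  forall s, s <> [] -> exists x, g x = F s /\ H s = Some x.

Definition unarily_idempotizable {X Y : Type} (F : list X -> Y) : Prop :=
  (forall y, ran (unary_part F) y <-> ran_flat F y) /\ one_to_one (unary_part F).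

(* Main.v *)
Require Import Defs.
From Stdlib Require Import List ClassicalEpsilon FunctionalExtensionality.
Import ListNotations.

Section Aux.
Context (X Y : Type) (hX : inhabited X) (F : list X -> Y).

Definition Hdef (s : list X) : option X :=
  match s with [] => None | _ :: _ => Some (epsilon hX (fun x => unary_part F x = F s)) end.

Lemma iii_to_i (H : list X -> option X) (f : X -> Y) :
  unarily_idempotent H -> bijection_onto f (ran_flat F) -> flat_factors F f H ->
  f = unary_part F /\ flat_is_inv_comp H (unary_part F) F.
Proof.
  intros [_ Hid] _ Hff.
  assert (Ef : f = unary_part F).
  { apply functional_extensionality; intro x.
    destruct (Hff [x]) as [x' [E1 E2]]; [discriminate|].
    rewrite Hid in E1; injection E1 as <-. unfold unary_part; auto. }
  split; [exact Ef|].
  intros s Hs; destruct (Hff s Hs) as [x [E1 E2]]; exists x; subst f; auto.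
Qed.

Lemma i_props : unarily_idempotizable F ->
  (unarily_idempotent Hdef /\ flat_factors F (unary_part F) Hdef) /\
  flat_is_inv_comp Hdef (unary_part F) F.
Proof.
  intros [Hr Hinj].
  assert (K : forall s, s <> [] -> unary_part F (epsilon hX (fun x => unary_part F x = F s)) = F s).
  { intros s Hs. apply (epsilon_spec hX (fun x => unary_part F x = F s)).
    apply Hr. exists s; auto. }
  split; [split|].
  - split; [split|].
    + intros s E. destruct s; [reflexivity|discriminate].
    + reflexivity.
    + intros x. simpl. f_equal. apply Hinj. apply K. discriminate.
  - intros s Hs. destruct s as [|a s]; [congruence|].
    eexists; split; [reflexivity|]. symmetry; apply K; auto.
  - intros s Hs. destruct s as [|a s]; [congruence|].
    eexists; split; [|reflexivity]. apply K; auto.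
Qed.
End Aux.

Theorem corollary2p3 (X Y : Type) (hX : inhabited X) (hY : inhabited Y)
    (F : list X -> Y) :
  (* (i) <-> (ii) *)
  (unarily_idempotizable F <->
     (bijection_onto (unary_part F) (ran_flat F) /\
      exists H : list X -> option X,
        (unarily_idempotent H /\ flat_factors F (unary_part F) H) /\
        (forall H' : list X -> option X,
           unarily_idempotent H' /\ flat_factors F (unary_part F) H' -> H' = H) /\
        flat_is_inv_comp H (unary_part F) F)) /\
  (* (i) <-> (iii) *)
  (unarily_idempotizable F <->
     exists (H : list X -> option X) (f : X -> Y),
       unarily_idempotent H /\ bijection_onto f (ran_flat F) /\
       flat_factors F f H) /\
  (* moreover *)
  (forall (H : list X -> option X) (f : X -> Y),
     unarily_idempotent H -> bijection_onto f (ran_flat F) ->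
     flat_factors F f H ->
     f = unary_part F /\ flat_is_inv_comp H (unary_part F) F).
Proof.
  assert (A : unarily_idempotizable F ->
     exists (H : list X -> option X) (f : X -> Y),
       unarily_idempotent H /\ bijection_onto f (ran_flat F) /\ flat_factors F f H).
  { intros Hi. destruct (i_props X Y hX F Hi) as [[U V] W].
    exists (Hdef X Y hX F), (unary_part F). split; [exact U|]. split; [|exact V].
    destruct Hi as [Hr Hinj]. split; [exact Hinj|exact Hr]. }
  assert (B : (exists (H : list X -> option X) (f : X -> Y),
       unarily_idempotent H /\ bijection_onto f (ran_flat F) /\ flat_factors F f H) ->
       unarily_idempotizable F).
  { intros (H & f & U & Bj & V). destruct (iii_to_i X Y F H f U Bj V) as [Ef _].
    subst f. destruct Bj as [Hinj Hr]. split; assumption. }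
  split; [|split; [split; assumption|]].
  - split.
    + intros Hi. split; [destruct Hi as [Hr Hinj]; split; assumption|].
      destruct (i_props X Y hX F Hi) as [[U V] W].
      exists (Hdef X Y hX F). split; [split; assumption|]. split; [|exact W].
      intros H' [[[_ Hn] Hid] Hf]. apply functional_extensionality; intro s.
      destruct s as [|a s]; [exact Hn|].
      destruct (Hf (a :: s)) as [x [E1 E2]]; [discriminate|].
      destruct (V (a :: s)) as [y [E3 E4]]; [discriminate|].
      rewrite E1, E3. f_equal. destruct Hi as [_ Hinj]. apply Hinj. congruence.
    + intros [[Hinj Hr] _]. split; assumption.
  - intros H f U Bj V. exact (iii_to_i X Y F H f U Bj V).
Qed.
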